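(* Let $q$ be a prime power and let $M$ be a simple and cosimple matroid representable over $GF(q)$ that has two distinct loose elements $e$ and $f$. Then $r(M)\le 2q$.
   Context: All matroids are finite. An element $t$ of a matroid $M$ is loose if every circuit of $M$ containing $t$ has size at least the rank $r(M)$. A matroid is cosimple if its dual is simple. *)

(* Defs.v *)
From HB Require Import structures.
From mathcomp Require Import all_boot all_order all_algebra all_field.
Set Implicit Arguments. Unset Strict Implicit. Unset Printing Implicit Defensive.
Import GRing.Theory.

Record matroid (E : finType) := Matroid {
  indep : {set E} -> bool;
  indep0 : indep set0;
  indep_sub : forall I J : {set E}, J \subset I -> indep I -> indep J;
  indep_aug : forall I J : {set E}, indep I -> indep J -> #|I| < #|J| ->
     exists2 x, x \in J :\: I & indep (x |: I)
}.

Section Matroids.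
Variable E : finType.

Definition rank_of (P : {set E} -> bool) : nat := \max_(I : {set E} | P I) #|I|.
Definition basis_of (P : {set E} -> bool) (B : {set E}) : bool :=
  P B && (#|B| == rank_of P).
Definition circuit_of (P : {set E} -> bool) (C : {set E}) : bool :=
  ~~ P C && [forall x in C, P (C :\ x)].
(* simple: no circuit of size 1 (loop) or 2 (parallel pair) *)
Definition simple_of (P : {set E} -> bool) : Prop :=
  forall C, circuit_of P C -> 2 < #|C|.

Variable M : matroid E.

Definition mrank : nat := rank_of (indep M).
Definition circuit (C : {set E}) : bool := circuit_of (indep M) C.
Definition basis (B : {set E}) : bool := basis_of (indep M) B.

Definition dual_indep (I : {set E}) : bool :=
  [exists B : {set E}, basis B && (I \subset ~: B)].

Definition simple : Prop := simple_of (indep M).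
Definition cosimple : Prop := simple_of dual_indep.

Definition loose (t : E) : Prop :=
  forall C, circuit C -> t \in C -> mrank <= #|C|.

Definition representable (F : fieldType) : Prop :=
  exists (n : nat) (v : E -> 'rV[F]_n),
    forall I : {set E}, indep M I = free [seq v x | x <- enum I].
End Matroids.

Definition prime_power (q : nat) : Prop :=
  exists p k, prime p /\ 0 < k /\ q = p ^ k.

(* Main.v *)
Require Import Defs.
From HB Require Import structures.
From mathcomp Require Import all_boot all_order all_algebra all_field.
From mathcomp Require Import zify.
Set Implicit Arguments. Unset Strict Implicit. Unset Printing Implicit Defensive.
Import GRing.Theory.

Lemma circuit_exists (E : finType) (P : {set E} -> bool) (D : {set E}) :
  ~~ P D -> exists C : {set E}, (C \subset D) && circuit_of P C.
Proof.
move: (ltnSn #|D|); move: {2}#|D|.+1 => n.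
elim: n D => [|n IH] D //= HD nPD.
case: (boolP [forall x in D, P (D :\ x)]) => H.
  by exists D; rewrite subxx /circuit_of nPD H.
move/forall_inPn: H => [x xD nP].
have lt : #|D :\ x| < n by move: HD; rewrite (cardsD1 x D) xD.
have [C /andP[CD cC]] := IH (D :\ x) lt nP.
by exists C; rewrite cC (subset_trans CD) ?subD1set.
Qed.

Section Proofs.
Variables (E : finType) (M : matroid E).

Lemma rank_ge I : indep M I -> #|I| <= mrank M.
Proof. by move=> H; rewrite /mrank /rank_of; exact: (@leq_bigmax_cond _ (indep M) (fun J : {set E} => #|J|) I H). Qed.

Lemma loose_bound (S : {set E}) (x : E) : loose M x -> indep M S -> ~~ indep M (x |: S) ->
  mrank M <= #|S|.+1.
Proof.
move=> lx iS dS.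
have [C /andP[CS cC]] := circuit_exists dS.
have xC : x \in C.
  apply/negP => xC; move/andP: cC => [nC _]; move/negP: nC; apply.
  apply: (indep_sub _ iS); apply/subsetP => y yC.
  have := subsetP CS y yC; rewrite !inE; case/orP => // /eqP yx.
  by move: xC; rewrite -yx yC.
apply: (leq_trans (lx C cC xC)).
apply: (leq_trans (subset_leq_card CS)); rewrite cardsU1.
by case: (x \notin S).
Qed.

Variables (F : fieldType) (n : nat) (v : E -> 'rV[F]_n).
Hypothesis hv : forall I : {set E}, indep M I = free [seq v x | x <- enum I].

Lemma perm_U1 (S : {set E}) (x : E) : x \notin S -> perm_eq (enum (x |: S)) (x :: enum S).
Proof.
move=> xS; apply: uniq_perm; first exact: enum_uniq.
  by rewrite /= mem_enum xS enum_uniq.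
by move=> y; rewrite mem_enum !inE mem_enum.
Qed.

Lemma dep_of_span (S : {set E}) (x : E) : x \notin S ->
  v x \in <<[seq v y | y <- enum S]>>%VS -> ~~ indep M (x |: S).
Proof.
move=> xS H; rewrite hv (perm_free (perm_map v (perm_U1 xS))) /= free_cons.
by rewrite H.
Qed.

Lemma span_of_dep (S : {set E}) (x : E) : x \notin S -> indep M S -> ~~ indep M (x |: S) ->
  v x \in <<[seq v y | y <- enum S]>>%VS.
Proof.
move=> xS iS; rewrite hv (perm_free (perm_map v (perm_U1 xS))) /= free_cons.
by rewrite -hv iS andbT negbK.
Qed.

Lemma span_sum (B : {set E}) (w : 'I_#|B| -> F) :
  (\sum_i w i *: v (enum_val i))%R \in
   <<[seq v y | y <- enum [set (enum_val i : E) | i in [set i : 'I_#|B| | w i != 0%R]]]>>%VS.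
Proof.
apply: memv_suml => i _; case: (eqVneq (w i) 0%R) => [->|nz].
  by rewrite scale0r mem0v.
apply: memvZ; apply: memv_span; apply: map_f; rewrite mem_enum.
by apply: imset_f; rewrite inE.
Qed.

Lemma card_S (B : {set E}) (w : 'I_#|B| -> F) :
  #|[set (enum_val i : E) | i in [set i : 'I_#|B| | w i != 0%R]]|
   + #|[set i : 'I_#|B| | w i == 0%R]| = #|B|.
Proof.
rewrite card_imset; last exact: enum_val_inj.
have -> : [set i : 'I_#|B| | w i == 0%R] = ~: [set i | w i != 0%R].
  by apply/setP => i; rewrite !inE negbK.
by rewrite cardsC card_ord.
Qed.

Lemma S_sub (B : {set E}) (X : {set 'I_#|B|}) :
  [set (enum_val i : E) | i in X] \subset B.
Proof. by apply/subsetP => y /imsetP [i _ ->]; apply: enum_valP. Qed.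

End Proofs.

Theorem corollary4p4 (q : nat) (F : finFieldType) (E : finType) (M : matroid E)
  (e f : E) :
  prime_power q -> #|F| = q ->
  simple M -> cosimple M -> representable M F ->
  e != f -> loose M e -> loose M f ->
  mrank M <= 2 * q.
Proof.
move=> _ cardF _ cosim [n [v hv]] ef le lf.
have dI : dual_indep M [set e; f].
  case: (boolP (dual_indep M [set e; f])) => // H; have [C /andP[CD cC]] := circuit_exists H.
  have h1 := cosim C cC; have := subset_leq_card CD; rewrite cards2 ef.
  by move=> h2; have := leq_trans h1 h2.
move/existsP: dI => [B /andP[/andP[iB /eqP kB] sB]].
have eB : e \notin B.
  by have := subsetP sB e; rewrite !inE eqxx /= => /(_ isT).
have fB : f \notin B.
  by have := subsetP sB f; rewrite !inE eqxx orbT /= => /(_ isT).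
have kB' : #|B| = mrank M by [].
have depx : forall x, x \notin B -> ~~ indep M (x |: B).
  move=> x xB; apply/negP => /(rank_ge (M := M)); rewrite cardsU1 xB -kB'.
  by rewrite ltnn.
pose t := [tuple v (enum_val i) | i < #|B|].
have spanE : <<t>>%VS = <<[seq v y | y <- enum B]>>%VS.
  apply: eq_span => y; apply/tnthP/mapP => [[i ->]|[x xB ->]].
    by exists (enum_val i); rewrite ?mem_enum ?enum_valP // tnth_mktuple.
  rewrite mem_enum in xB; exists (enum_rank_in xB x).
  by rewrite tnth_mktuple enum_rankK_in.
have expand : forall x, x \notin B ->
    v x = (\sum_i coord t i (v x) *: v (enum_val i))%R.
  move=> x xB; have := span_of_dep hv xB iB (depx x xB).
  rewrite -spanE => /coord_span {1}->.
  by apply: eq_bigr => i _; rewrite -tnth_nth tnth_mktuple.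
pose a i := coord t i (v e); pose c i := coord t i (v f).
have zb : forall x (w : 'I_#|B| -> F), loose M x -> x \notin B ->
    v x = (\sum_i w i *: v (enum_val i))%R -> #|[set i | w i == 0%R]| <= 1.
  move=> x w lx xB vx.
  have xS : x \notin [set (enum_val i : E) | i in [set i : 'I_#|B| | w i != 0%R]].
    by apply/negP => /(subsetP (S_sub _)); apply/negP.
  have iS := indep_sub (S_sub [set i : 'I_#|B| | w i != 0%R]) iB.
  have := loose_bound lx iS (dep_of_span hv xS _).
  move=> /(_ ltac:(rewrite vx; exact: (span_sum v w))).
  have := card_S w; move: kB'.
  set s1 := #|[set (enum_val i : E) | i in _]|.
  set z1 := #|[set i | w i == 0%R]|.
  clearbody s1 z1; lia.
have zl : forall l : F, #|[set i | (c i - l * a i == 0)%R]| <= 2.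
  move=> l; pose w i := (c i - l * a i)%R.
  have hw : (v f - l *: v e)%R = (\sum_i w i *: v (enum_val i))%R.
    rewrite {1}(expand f fB) {1}(expand e eB) scaler_sumr -sumrB.
    by apply: eq_bigr => i _; rewrite scalerBl scalerA.
  have iS := indep_sub (S_sub [set i : 'I_#|B| | w i != 0%R]) iB.
  have eS : e \notin [set (enum_val i : E) | i in [set i : 'I_#|B| | w i != 0%R]].
    by apply/negP => /(subsetP (S_sub _)); apply/negP.
  have fS : f \notin [set (enum_val i : E) | i in [set i : 'I_#|B| | w i != 0%R]].
    by apply/negP => /(subsetP (S_sub _)); apply/negP.
  have := card_S w; move: kB'.
  case: (boolP (indep M (e |: [set (enum_val i : E) | i in [set i : 'I_#|B| | w i != 0%R]]))) => [iS'|dS'].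
    have fS' : f \notin e |: [set (enum_val i : E) | i in [set i : 'I_#|B| | w i != 0%R]].
      by rewrite !inE negb_or fS eq_sym ef.
    have spf : v f \in <<[seq v y | y <- enum (e |: [set (enum_val i : E) | i in [set i : 'I_#|B| | w i != 0%R]])]>>%VS.
      have -> : v f = ((v f - l *: v e) + l *: v e)%R by rewrite subrK.
      have h1 : (v f - l *: v e)%R \in <<[seq v y | y <- enum (e |: [set (enum_val i : E) | i in [set i : 'I_#|B| | w i != 0%R]])]>>%VS.
        apply: (subvP (sub_span _)); last by rewrite hw; exact: span_sum.
        move=> y /mapP [z zS ->]; apply: map_f; rewrite mem_enum in zS *.
        by rewrite mem_enum inE zS orbT.
      have h2 : v e \in <<[seq v y | y <- enum (e |: [set (enum_val i : E) | i in [set i : 'I_#|B| | w i != 0%R]])]>>%VS.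
        by apply: memv_span; apply: map_f; rewrite mem_enum !inE eqxx.
      exact: (memvD h1 (memvZ l h2)).
    have := loose_bound lf iS' (dep_of_span hv fS' spf).
    rewrite cardsU1 eS.
    set s1 := #|[set (enum_val i : E) | i in _]|.
    set z1 := #|[set i | w i == 0%R]|.
    clearbody s1 z1; simpl; lia.
  have := loose_bound le iS dS'.
  set s1 := #|[set (enum_val i : E) | i in _]|.
  set z1 := #|[set i | w i == 0%R]|.
  clearbody s1 z1; lia.
have z0 : #|[set i | (c i - 0 * a i == 0)%R]| <= 1.
  have -> : [set i | (c i - 0 * a i == 0)%R] = [set i | c i == 0%R].
    by apply/setP => i; rewrite !inE mul0r subr0.
  exact: (zb f c lf fB (expand f fB)).
have za : #|[set i | a i == 0%R]| <= 1 := zb e a le eB (expand e eB).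
have cnt : forall P : pred 'I_#|B|, \sum_i (P i : nat) = #|[set i | P i]|.
  move=> P; rewrite -[#|[set i | P i]|]sum1_card [RHS]big_mkcond /=; apply: eq_bigr => i _.
  by rewrite inE; case: (P i).
have main : #|B| <= #|[set i | a i == 0%R]| +
     \sum_(l : F) #|[set i | (c i - l * a i == 0)%R]|.
  under eq_bigr => l _ do rewrite -cnt.
  rewrite exchange_big -cnt -big_split /=.
  apply: (@leq_trans (\sum_(i : 'I_#|B|) 1)).
    by rewrite big_const_ord iter_addn_0 mul1n.
  apply: leq_sum => i _.
  case: (eqVneq (a i) 0%R) => [->|nz]; first by rewrite add1n.
  by rewrite (bigD1 (c i / a i)%R) //= divfK // subrr eqxx.
have sumb : (\sum_(l : F) #|[set i | (c i - l * a i == 0)%R]|).+1 <= 2 * #|F|.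
  rewrite (bigD1 0%R) //=.
  have h1 : \sum_(l | l != 0%R) #|[set i | (c i - l * a i == 0)%R]|
      <= \sum_(l : F | l != 0%R) 2 by apply: leq_sum => l _; exact: zl.
  have h2 : \sum_(l : F | l != 0%R) 2 = #|F|.-1 * 2.
    rewrite (eq_bigl (fun l => l \in [set~ 0%R])); last by move=> l; rewrite !inE.
    by rewrite sum_nat_const cardsC1.
  have h3 : 0 < #|F| by apply/card_gt0P; exists 0%R.
  move: h1 h2 h3 z0; set A := \sum_(l | l != 0%R) _; set z := #|_|. move=> h1 h2 h3 hz; rewrite h2 in h1; have := prednK h3. clearbody A z; move=> h4; set m := #|F| in h1 h3 h4 *. clearbody m; clear h2; lia.
rewrite -cardF -kB'.
move: main za sumb; set A := \sum_(l : F) _; set z := #|[set i | a i == 0%R]|; lia.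
Qed.
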